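(* Let $n\ge3$, $a>0$, $\sigma>1/2$. Let $V_0(x)=V_0(|x|)$ be a radially symmetric, radially decreasing, real-valued $C^1$ function on $\mathbb{R}^n$, and let $c=(c_1,\vec 0)\in\mathbb{R}^n$ with $\vec0\in\mathbb{R}^{n-1}$. Writing $x=(x_1,\vec y)\in\mathbb{R}\times\mathbb{R}^{n-1}$, we have, pointwise for $x\ne0$, $$ i[V_0(x),\gamma_{-c}+\gamma_c]\ \ge\ -2V_0'(|x|)\,\min\{f(|x+c|),f(|x-c|)\}\,\frac{2|\vec y|^2}{|x|}\,\frac{1}{|x|+|c|}\ \ge\ 0. $$
   Context: Notation: $g(r)=(1+ar^2)^{-\sigma/2}$; $f(r)=\int_0^r g^2(s)\,ds$; $F(x)=\int_0^{|x|}f(t)\,dt$; for $c\in\mathbb{R}^n$, $F_c(x)=F(x-c)$ and $\gamma_c=i[-\Delta,F_c]=-i(\nabla\cdot\nabla F_c+\nabla F_c\cdot\nabla)$. For a potential $V$, the commutator $i[V,\gamma_c]$ is the multiplication operator by the function $-2\nabla F_c\cdot\nabla V$. $V_0'$ denotes the radial derivative. *)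

(* Defs.v *)
From HB Require Import structures.
From mathcomp Require Import all_boot all_order all_algebra.
From mathcomp Require Import all_classical all_reals all_analysis.
Set Implicit Arguments. Unset Strict Implicit. Unset Printing Implicit Defensive.
Import Order.TTheory GRing.Theory Num.Theory.
Import numFieldNormedType.Exports.
Local Open Scope classical_set_scope.
Local Open Scope ring_scope.

Section Defs.
Variables (R : realType) (n : nat).

(* Euclidean norm on R^n (the library norm on 'rV_n is the sup norm). *)
Definition enorm (x : 'rV[R]_n) : R := Num.sqrt (\sum_(i < n) x 0 i ^+ 2).

Definition dotv (u v : 'rV[R]_n) : R := \sum_(i < n) u 0 i * v 0 i.

Definition evec (j : 'I_n) : 'rV[R]_n := delta_mx 0 j.

Definition grad (h : 'rV[R]_n -> R) (x : 'rV[R]_n) : 'rV[R]_n :=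
  \row_(j < n) derive h x (evec j).

Definition C1 (h : 'rV[R]_n -> R) : Prop :=
  forall j : 'I_n, (forall x, derivable h x (evec j)) /\
                   continuous (fun x => derive h x (evec j)).

Definition firstvec (c1 : R) : 'rV[R]_n :=
  \row_(j < n) (if (j : nat) == 0%N then c1 else 0).

(* |y|^2 where x = (x_1, y). *)
Definition ysq (x : 'rV[R]_n) : R :=
  \sum_(i < n | (i : nat) != 0%N) x 0 i ^+ 2.

Definition gfun (a sigma r : R) : R := powR (1 + a * r ^+ 2) (- sigma / 2).

Definition ffun (a sigma r : R) : R :=
  Rintegral (@lebesgue_measure R) `[0, r]%classic (fun s => gfun a sigma s ^+ 2).

Definition Ffun (a sigma : R) (x : 'rV[R]_n) : R :=
  Rintegral (@lebesgue_measure R) `[0, enorm x]%classic (ffun a sigma).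

Definition Fc (a sigma : R) (c : 'rV[R]_n) (x : 'rV[R]_n) : R := Ffun a sigma (x - c).

(* The function by which i[V, gamma_c] acts: -2 grad F_c . grad V. *)
Definition commVgamma (a sigma : R) (V : 'rV[R]_n -> R) (c : 'rV[R]_n)
  (x : 'rV[R]_n) : R :=
  - 2 * dotv (grad (Fc a sigma c) x) (grad V x).

End Defs.

(* Main.v *)
Require Import Defs.
From HB Require Import structures.
From mathcomp Require Import all_boot all_order all_algebra.
From mathcomp Require Import all_classical all_reals all_analysis.
From mathcomp Require Import ring lra measurable_realfun.
Import Order.TTheory GRing.Theory Num.Theory.
Import numFieldNormedType.Exports.
Local Open Scope ring_scope.
Local Open Scope classical_set_scope.
Section F.
Variable R : realType.
Notation mu := (@lebesgue_measure R).
Lemma intg (h : R -> R) (M : R) (A : set R) : measurable A -> (mu A < +oo)%E ->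
  measurable_fun setT h -> (forall t, A t -> `|h t| <= M) ->
  mu.-integrable A (EFin \o h).
Proof.
move=> mA Afin mh hb; apply: measurable_bounded_integrable => //.
  exact: measurable_funS mh.
exists M; split; first by rewrite num_real.
move=> N MN t At /=; apply: le_trans (hb _ At) _; exact: ltW.
Qed.

Lemma intB (h : R -> R) (M r s : R) : measurable_fun setT h ->
  (forall t, 0 <= t <= s -> `|h t| <= M) -> 0 <= r -> r <= s ->
  Rintegral mu `[0, s] h - Rintegral mu `[0, r] h = Rintegral mu `]r, s] h.
Proof.
move=> mh hb r0 rs.
apply: Rintegral_itvB; last 2 first.
- by rewrite bnd_simp.
- by rewrite bnd_simp.
apply: (@intg _ M) => //.
by rewrite lebesgue_measure_itv /=; case: ifP => _; rewrite ?ltry.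
Qed.

Lemma cst_itv (c r s : R) : r <= s -> Rintegral mu `]r, s] (fun _ => c) = c * (s - r).
Proof.
move=> rs.
rewrite Rintegral_cst //.
congr (_ * _).
have := lebesgue_measure_itv `]r, s]%R.
rewrite /= lte_fin.
case: ltgtP rs => // [rs' _ |-> _] E.
  by rewrite (congr1 fine E).
by rewrite (congr1 fine E) subrr.
Qed.

Lemma int_bounds (h : R -> R) (lo hi r s : R) : measurable_fun setT h -> r <= s ->
  (forall t, r < t <= s -> lo <= h t <= hi) ->
  lo * (s - r) <= Rintegral mu `]r, s] h <= hi * (s - r).
Proof.
move=> mh rs hb.
have mA : measurable (`]r, s] : set R) by [].
have muA : mu `]r, s] = (s - r)%:E.
  rewrite lebesgue_measure_itv /=; case: ifPn; rewrite lte_fin.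
    by move=> _; rewrite EFinB.
  rewrite -leNgt => sr; have -> : s = r by apply/eqP; rewrite eq_le sr rs.
  by rewrite subrr.
have ih : mu.-integrable `]r, s] (EFin \o h).
  apply: (@intg _ (`|lo| + `|hi|)) => //; first by rewrite muA ltry.
  move=> t /=; rewrite in_itv /= => /hb /andP[h1 h2].
  have := ler_norm lo; have := ler_norm (- lo); rewrite normrN.
  have := ler_norm hi; have := normr_ge0 lo; have := normr_ge0 hi.
  rewrite ler_norml => *; apply/andP; split; lra.
have ic : forall c : R, mu.-integrable (`]r, s] : set R) (EFin \o (fun _ : R => c)).
  move=> c; apply: (@intg _ `|c|) => //; first by rewrite muA ltry.
have c1 := le_Rintegral _ (ic lo) ih.
have c2 := le_Rintegral _ ih (ic hi).
rewrite !cst_itv // in c1 c2.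
rewrite c1 ?c2 // => t /=; rewrite in_itv /= => /hb /andP[] //.
Qed.
Lemma lip_cont (f : R -> R) : (forall x y, `|f x - f y| <= `|x - y|) -> continuous f.
Proof.
move=> hf x; apply/cvgrPdist_lt => e e0.
exists e => //= t; rewrite /ball /= => xt.
exact: le_lt_trans (hf _ _) xt.
Qed.

Lemma deriv_bound (phi : R -> R) (a L K d : R) : 0 < d -> 0 <= K ->
  (forall h, h != 0 -> `|h| < d -> `|h^-1 * (phi (h + a) - phi a) - L| <= K * `|h|) ->
  is_derive a 1 phi L.
Proof.
move=> d0 K0 hb.
have cv : (fun h : R => h^-1 *: ((phi \o shift a) (h *: 1) - phi a)) @ 0^' --> L.
  apply/cvgrPdist_le => e e0.
  exists (Num.min d (e / (K + 1))).
    by rewrite /= lt_min d0 divr_gt0 // ltr_pwDr.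
  move=> h /= hb' h0; rewrite /ball /= sub0r normrN in hb'.
  move: hb'; rewrite lt_min => /andP[hd he].
  rewrite distrC /= /shift [h%:A]mulr1.
  apply: le_trans (hb _ h0 hd) _.
  have Kh : K * `|h| <= (K + 1) * `|h| by rewrite ler_wpM2r // lerDl.
  apply: le_trans Kh _.
  rewrite -ler_pdivlMl ?ltr_pwDr // mulrC; exact: ltW.
split; first by apply/cvg_ex; exists L.
exact: cvg_lim cv.
Qed.
Variables (a sigma : R).
Hypothesis ha : 0 < a.
Hypothesis hs : 0 < sigma.

Lemma g2_meas : measurable_fun setT (fun s : R => gfun a sigma s ^+ 2).
Proof.
apply: measurable_funX; rewrite /gfun.
apply: measurableT_comp (measurable_powR _) _.
apply: measurable_funD => //; apply: measurable_funM => //.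
Qed.

Lemma g2_bnd s : 0 <= gfun a sigma s ^+ 2 <= 1.
Proof.
rewrite exprn_ge0 ?powR_ge0 //=; apply: exprn_ile1; first exact: powR_ge0.
rewrite /gfun -[X in _ <= X](powRr0 (1 + a * s ^+ 2)).
apply: ler_powR; first by rewrite lerDl mulr_ge0 // ?sqr_ge0 // ltW.
rewrite mulNr oppr_le0 divr_ge0 // ltW //.
Qed.

Notation f := (ffun a sigma).

Lemma f_neg r : r < 0 -> f r = 0.
Proof.
move=> r0; rewrite /ffun set_itv_ge ?Rintegral_set0 //.
by rewrite bnd_simp -ltNge.
Qed.

Lemma f_0 : f 0 = 0.
Proof. by rewrite /ffun set_itv1 Rintegral_set1. Qed.

Lemma f_pos r s : 0 <= r -> r <= s -> 0 <= f s - f r <= s - r.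
Proof.
move=> r0 rs; rewrite /ffun (@intB _ 1) //.
- have := @int_bounds (fun s => gfun a sigma s ^+ 2) 0 1 r s g2_meas rs.
  by rewrite mul0r mul1r; apply => t _; exact: g2_bnd.
- exact: g2_meas.
- by move=> t _; rewrite ger0_norm; have /andP[] := g2_bnd t.
Qed.
Arguments f_pos {r s}.
Lemma f_mono r s : r <= s -> f r <= f s.
Proof.
move=> rs; have [r0|r0] := ltP r 0.
  rewrite f_neg //; have [s0|s0] := ltP s 0; first by rewrite f_neg.
  have := f_pos (lexx 0) s0; rewrite f_0 subr0 => /andP[] //.
by have /andP[] := f_pos r0 rs; rewrite subr_ge0.
Qed.
Arguments f_mono {r s}.

Lemma f_lip r s : r <= s -> f s - f r <= s - r.
Proof.
move=> rs; have [r0|r0] := ltP r 0.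
  rewrite (f_neg _ r0); have [s0|s0] := ltP s 0; first by rewrite f_neg // subrr subr_ge0.
  have := f_pos (lexx 0) s0; rewrite f_0 subr0 => /andP[_ h]; lra.
by have /andP[] := f_pos r0 rs.
Qed.
Arguments f_lip {r s}.

Lemma f_ge0 r : 0 <= f r.
Proof.
have [r0|r0] := ltP r 0; first by rewrite f_neg.
by rewrite -f_0; exact: f_mono.
Qed.

Lemma f_le r : 0 <= r -> f r <= r.
Proof. by move=> r0; have := f_lip r0; rewrite f_0 !subr0. Qed.
Arguments f_le {r}.

Lemma f_lip2 r s : `|f r - f s| <= `|r - s|.
Proof.
have [rs|sr] := leP r s.
  have h1 := f_lip rs; have h2 := f_mono rs.
  rewrite distrC [`|r - s|]distrC !ger0_norm; lra.
have h1 := f_lip (ltW sr); have h2 := f_mono (ltW sr).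
rewrite !ger0_norm; lra.
Qed.

Lemma f_cont : continuous f.
Proof. exact: lip_cont f_lip2. Qed.

Lemma f_meas : measurable_fun setT f.
Proof. exact: continuous_measurable_fun f_cont. Qed.

Definition Phi r := Rintegral mu `[0, r] f.

Lemma Phi_inc r s : 0 <= r -> r <= s ->
  f r * (s - r) <= Phi s - Phi r <= f s * (s - r).
Proof.
move=> r0 rs; rewrite /Phi (@intB _ s) //; last first.
  by move=> t /andP[t0 ts]; rewrite ger0_norm ?f_ge0 //; apply: le_trans (f_le t0) ts.
  exact: f_meas.
apply: int_bounds => //; first exact: f_meas.
move=> t /andP[rt ts]; rewrite !f_mono // ltW //.
Qed.
Arguments Phi_inc {r s}.

Lemma Phi_err r s : 0 <= r -> 0 <= s -> `|Phi s - Phi r - (s - r) * f r| <= (s - r) ^+ 2.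
Proof.
move=> r0 s0; have [rs|sr] := leP r s.
  have /andP[h1 h2] := Phi_inc r0 rs.
  have h3 := f_lip rs.
  rewrite ger0_norm; last by nra.
  nra.
have /andP[h1 h2] := Phi_inc s0 (ltW sr).
have h3 := f_lip (ltW sr).
rewrite ger0_norm; last by nra.
nra.
Qed.
End F.
Section A.
Variable R : realType.

Lemma alg_sq (P P0 h z : R) : 0 <= P -> 0 <= P0 -> P ^+ 2 = P0 ^+ 2 + 2 * h * z + h ^+ 2 ->
  z ^+ 2 <= P0 ^+ 2 -> (P - P0) ^+ 2 <= h ^+ 2.
Proof.
move=> P_ge0 P0_ge0 eP hz.
have h1 : (P0 ^+ 2 + h * z) ^+ 2 <= (P0 * P) ^+ 2.
  rewrite exprMn eP; nra.
have h2 : P0 ^+ 2 + h * z <= P0 * P.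
  have : `|P0 ^+ 2 + h * z| <= `|P0 * P|.
    by rewrite -ler_sqr ?normr_ge0 // !real_normK ?num_real.
  rewrite (ger0_norm (mulr_ge0 P0_ge0 P_ge0)).
  apply: le_trans; exact: ler_norm.
nra.
Qed.

Lemma alg_dq (P P0 h z : R) : 0 <= P -> 0 < P0 -> P ^+ 2 = P0 ^+ 2 + 2 * h * z + h ^+ 2 ->
  z ^+ 2 <= P0 ^+ 2 -> h != 0 -> `|(P - P0) / h - z / P0| <= 2 * `|h| / P0.
Proof.
move=> P_ge0 P0_gt0 eP hz h0.
set u := (P - P0) / h - z / P0.
have hsq := alg_sq _ _ _ _ P_ge0 (ltW P0_gt0) eP hz.
have PP0 : 0 < P + P0 by lra.
have eu : u * (h * P0 * (P + P0)) = h * (z * (P0 - P) + P0 * h).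
  rewrite /u.
  have -> : ((P - P0) / h - z / P0) * (h * P0 * (P + P0)) =
     (P - P0) * P0 * (P + P0) - z * h * (P + P0).
    by field; rewrite h0 /= gt_eqF.
  nra.
have n1 : `|P0 - P| <= `|h|.
  by rewrite -ler_sqr ?normr_ge0 // !real_normK ?num_real // -sqrrN opprB.
have n2 : `|z| <= P0.
  by rewrite -(ger0_norm (ltW P0_gt0)) -ler_sqr ?normr_ge0 // !real_normK ?num_real.
have n3 : `|z * (P0 - P) + P0 * h| <= 2 * P0 * `|h|.
  apply: le_trans (ler_normD _ _) _; rewrite !normrM (gtr0_norm P0_gt0).
  have : `|z| * `|P0 - P| <= P0 * `|h| by apply: ler_pM; rewrite ?normr_ge0.
  lra.
have hn : 0 < `|h| by rewrite normr_gt0.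
have : `|u| * (`|h| * P0 * (P + P0)) <= `|h| * (2 * P0 * `|h|).
  have := congr1 (fun t => `|t|) eu; rewrite /= !normrM (gtr0_norm P0_gt0) (gtr0_norm PP0).
  move=> e; rewrite e; apply: ler_wpM2l; rewrite ?normr_ge0 //.
move=> hu.
rewrite ler_pdivlMr //.
have : `|u| * (P + P0) <= 2 * `|h|.
  have hP : 0 < `|h| * P0 by rewrite mulr_gt0.
  rewrite -(ler_pM2l hP); move: hu; rewrite !mulrA.
  have -> : `|h| * P0 * `|u| * (P + P0) = `|u| * `|h| * P0 * (P + P0) by ring.
  have -> : `|h| * P0 * 2 * `|h| = `|h| * 2 * P0 * `|h| by ring.
  by [].
have := normr_ge0 u; nra.
Qed.

Lemma alg_q (P P0 h z F D : R) : 0 <= P -> 0 <= P0 -> P ^+ 2 = P0 ^+ 2 + 2 * h * z + h ^+ 2 ->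
  z ^+ 2 <= P0 ^+ 2 -> h != 0 -> 0 <= F -> (P0 = 0 -> F = 0) ->
  `|D - (P - P0) * F| <= (P - P0) ^+ 2 ->
  `|h^-1 * D - F / P0 * z| <= (2 * F / P0 + 1) * `|h|.
Proof.
move=> P_ge0 P0_ge0 eP hz h0 F0 PF hD.
have hsq := alg_sq _ _ _ _ P_ge0 P0_ge0 eP hz.
have hn : 0 < `|h| by rewrite normr_gt0.
have e1 : `|h^-1 * (D - (P - P0) * F)| <= `|h|.
  rewrite normrM normfV ler_pdivrMl // -expr2 real_normK ?num_real //.
  exact: le_trans hD hsq.
have [P00|P0p] := eqVneq P0 0.
  rewrite P00 (PF P00) !(mul0r, mulr0) subr0 add0r mul1r.
  by move: e1; rewrite P00 (PF P00) mulr0 subr0.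
have P0_gt0 : 0 < P0 by rewrite lt_def P0p.
have e2 := alg_dq _ _ _ _ P_ge0 P0_gt0 eP hz h0.
have -> : h^-1 * D - F / P0 * z = h^-1 * (D - (P - P0) * F) + F * ((P - P0) / h - z / P0).
  by field; rewrite h0 P0p.
apply: le_trans (ler_normD _ _) _.
rewrite [`|F * _|]normrM (ger0_norm F0).
have : F * `|(P - P0) / h - z / P0| <= F * (2 * `|h| / P0) by apply: ler_wpM2l.
have -> : F * (2 * `|h| / P0) = 2 * F / P0 * `|h| by rewrite mulrA mulrCA !mulrA [_ * F]mulrC -!mulrA [_^-1 * _]mulrC.
lra.
Qed.
End A.
Section RR.
Variable R : realType.

Lemma L_part2 (F P m M : R) : 0 <= m -> m <= F -> 0 <= P -> P <= M -> 0 < M ->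
  (P = 0 -> F = 0) -> m / M <= F / P.
Proof.
move=> m0 mF P0 PM M0 PF.
have [P00|Pn] := eqVneq P 0.
  rewrite (PF P00) in mF; have -> : m = 0 by apply/eqP; rewrite eq_le m0 mF.
  by rewrite P00 (PF P00) !mul0r.
have Pp : 0 < P by rewrite lt_def Pn.
rewrite ler_pdivrMr // mulrAC ler_pdivlMr //.
apply: ler_pM => //; exact: ltW.
Qed.

Lemma L_ratio (al be Pa Pb : R) : 0 <= al -> 0 <= be -> 0 < Pa -> 0 < Pb ->
  be ^+ 2 * Pa ^+ 2 <= al ^+ 2 * Pb ^+ 2 -> be / Pb <= al / Pa.
Proof.
move=> a0 b0 Pa0 Pb0 h.
rewrite ler_pdivrMr // mulrAC ler_pdivlMr //.
have := mulr_ge0 b0 (ltW Pa0); have := mulr_ge0 a0 (ltW Pb0).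
move=> *; nra.
Qed.

Lemma L_part1 (x0 c1 r2 Fp Fm Pp Pm : R) : 0 <= r2 -> 0 <= x0 * c1 ->
  0 <= Pp -> 0 <= Pm -> Pp ^+ 2 = (x0 + c1) ^+ 2 + r2 -> Pm ^+ 2 = (x0 - c1) ^+ 2 + r2 ->
  0 <= Fp -> 0 <= Fm -> (Pm <= Pp -> Fm <= Fp) -> (Pm = 0 -> Fm = 0) ->
  0 <= Fp * (x0 * (x0 + c1)) / Pp + Fm * (x0 * (x0 - c1)) / Pm.
Proof.
move=> r0 xc Pp0 Pm0 ePp ePm Fp0 Fm0 FF PF.
have q0 : 0 <= x0 * (x0 + c1) by rewrite mulrDr; have := sqr_ge0 x0; rewrite expr2; lra.
have t1 : 0 <= Fp * (x0 * (x0 + c1)) / Pp by rewrite divr_ge0 // mulr_ge0.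
have [p0|p0] := leP 0 (x0 * (x0 - c1)).
  by rewrite addr_ge0 // divr_ge0 // mulr_ge0.
have [Pm00|Pmn] := eqVneq Pm 0.
  by rewrite Pm00 (PF Pm00) mul0r mul0r addr0.
have Pmp : 0 < Pm by rewrite lt_def Pmn.
have PmPp : Pm <= Pp.
  rewrite -ler_sqr ?nnegrE // ePp ePm; nra.
have Ppp : 0 < Pp by apply: lt_le_trans PmPp.
have hr : x0 * (c1 - x0) / Pm <= x0 * (x0 + c1) / Pp.
  apply: L_ratio => //; first by lra.
  rewrite ePp ePm.
  have : 0 <= x0 ^+ 2 * r2 * (x0 * c1) by rewrite mulr_ge0 // mulr_ge0 // sqr_ge0.
  move=> h; nra.
have hF := FF PmPp.
have : Fm * (x0 * (c1 - x0) / Pm) <= Fp * (x0 * (x0 + c1) / Pp).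
  apply: ler_pM => //; rewrite divr_ge0 //; try lra; exact: ltW.
have -> : Fm * (x0 * (x0 - c1)) / Pm = - (Fm * (x0 * (c1 - x0) / Pm)).
  by field.
rewrite -mulrA; lra.
Qed.

Lemma L_final (x0 c1 r2 Fp Fm Pp Pm N C D : R) :
  0 <= r2 -> 0 <= Pp -> 0 <= Pm -> Pp ^+ 2 = (x0 + c1) ^+ 2 + r2 -> Pm ^+ 2 = (x0 - c1) ^+ 2 + r2 ->
  0 < N -> N ^+ 2 = x0 ^+ 2 + r2 -> C = `|c1| ->
  0 <= Fp -> 0 <= Fm -> (Pm <= Pp -> Fm <= Fp) -> (Pp <= Pm -> Fp <= Fm) ->
  (Pm = 0 -> Fm = 0) -> (Pp = 0 -> Fp = 0) -> D <= 0 ->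
  - 2 * D * Num.min Fp Fm * (2 * r2 / N) * (1 / (N + C)) <=
    - 2 * (Fp / Pp * D / N * (N ^+ 2 + c1 * x0)) + - 2 * (Fm / Pm * D / N * (N ^+ 2 - c1 * x0))
  /\ 0 <= - 2 * D * Num.min Fp Fm * (2 * r2 / N) * (1 / (N + C)).
Proof.
move=> r0 Pp0 Pm0 ePp ePm N0 eN eC Fp0 Fm0 F1 F2 PF1 PF2 D0.
set m := Num.min Fp Fm.
have m0 : 0 <= m by rewrite /m le_min Fp0 Fm0.
have mFp : m <= Fp by rewrite /m ge_min lexx.
have mFm : m <= Fm by rewrite /m ge_min lexx orbT.
have C0 : 0 <= C by rewrite eC normr_ge0.
have NC : 0 < N + C by lra.
have eC2 : C ^+ 2 = c1 ^+ 2 by rewrite eC real_normK ?num_real.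
have xN : `|x0| <= N.
  have : x0 ^+ 2 <= N ^+ 2 by rewrite eN; lra.
  rewrite -(real_normK (num_real x0)) => h; have := normr_ge0 x0; nra.
have xc : `|x0 * c1| <= N * C by rewrite normrM eC; apply: ler_wpM2r.
have xc' : x0 * c1 <= N * C by apply: le_trans (ler_norm _) xc.
have xc'' : - (N * C) <= x0 * c1 by rewrite lerNl; apply: le_trans (ler_norm _) _; rewrite normrN.
have PpM : Pp <= N + C.
  have : Pp ^+ 2 <= (N + C) ^+ 2 by rewrite ePp; nra.
  nra.
have PmM : Pm <= N + C.
  have : Pm ^+ 2 <= (N + C) ^+ 2 by rewrite ePm; nra.
  nra.
have h2p := L_part2 _ _ _ _ m0 mFp Pp0 PpM NC PF2.
have h2m := L_part2 _ _ _ _ m0 mFm Pm0 PmM NC PF1.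
have h1 : 0 <= Fp * (x0 * (x0 + c1)) / Pp + Fm * (x0 * (x0 - c1)) / Pm.
  have [xc0|xc0] := leP 0 (x0 * c1).
    exact: (L_part1 _ _ _ _ _ _ _ r0 xc0 Pp0 Pm0 ePp ePm Fp0 Fm0 F1 PF1).
  have a1 : 0 <= x0 * - c1 by rewrite mulrN; lra.
  have a2 : Pm ^+ 2 = (x0 + - c1) ^+ 2 + r2 by rewrite ePm.
  have a3 : Pp ^+ 2 = (x0 - - c1) ^+ 2 + r2 by rewrite ePp opprK.
  have := L_part1 _ _ _ _ _ _ _ r0 a1 Pm0 Pp0 a2 a3 Fm0 Fp0 F2 PF2.
  rewrite opprK => h; lra.
have eA : Fp / Pp * D / N * (N ^+ 2 + c1 * x0) + Fm / Pm * D / N * (N ^+ 2 - c1 * x0) =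
   D / N * ((Fp * (x0 * (x0 + c1)) / Pp + Fm * (x0 * (x0 - c1)) / Pm) + r2 * (Fp / Pp + Fm / Pm)).
  rewrite eN; ring.
have eR : - 2 * D * m * (2 * r2 / N) * (1 / (N + C)) = (- 2 * D / N) * (2 * r2 * (m / (N + C))).
  have Nn : N != 0 by rewrite gt_eqF.
  have NCn : N + C != 0 by rewrite gt_eqF.
  by field; rewrite NCn Nn.
have DN : 0 <= - 2 * D / N by apply: divr_ge0; [lra | exact: ltW].
split.
  have -> : - 2 * (Fp / Pp * D / N * (N ^+ 2 + c1 * x0)) + - 2 * (Fm / Pm * D / N * (N ^+ 2 - c1 * x0))
     = (- 2 * D / N) * ((Fp * (x0 * (x0 + c1)) / Pp + Fm * (x0 * (x0 - c1)) / Pm) + r2 * (Fp / Pp + Fm / Pm)).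
    by rewrite -mulrDr eA; ring.
  rewrite eR; apply: ler_wpM2l => //.
  have : r2 * (m / (N + C)) <= r2 * (Fp / Pp) by apply: ler_wpM2l.
  have : r2 * (m / (N + C)) <= r2 * (Fm / Pm) by apply: ler_wpM2l.
  lra.
rewrite eR; apply: mulr_ge0 => //; apply: mulr_ge0; first lra.
by rewrite divr_ge0 // ltW.
Qed.
End RR.
Section V.
Variable R : realType.
Variable n : nat.
Implicit Types z x : 'rV[R]_n.

Lemma deriv_boundV (V : normedModType R) (phi : V -> R) (a v : V) (L K d : R) : 0 < d -> 0 <= K ->
  (forall h : R, h != 0 -> `|h| < d -> `|h^-1 * (phi (h *: v + a) - phi a) - L| <= K * `|h|) ->
  is_derive a v phi L.
Proof.
move=> d0 K0 hb.
have cv : (fun h : R => h^-1 *: ((phi \o shift a) (h *: v) - phi a)) @ 0^' --> L.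
  apply/cvgrPdist_le => e e0.
  exists (Num.min d (e / (K + 1))).
    by rewrite /= lt_min d0 divr_gt0 // ltr_pwDr.
  move=> h /= hb' h0; rewrite /ball /= sub0r normrN in hb'.
  move: hb'; rewrite lt_min => /andP[hd he].
  rewrite distrC /= /shift.
  apply: le_trans (hb _ h0 hd) _.
  have Kh : K * `|h| <= (K + 1) * `|h| by rewrite ler_wpM2r // lerDl.
  apply: le_trans Kh _.
  rewrite -ler_pdivlMl ?ltr_pwDr // mulrC; exact: ltW.
split; first by apply/cvg_ex; exists L.
exact: cvg_lim cv.
Qed.

Lemma evecE (j i : 'I_n) : evec R j 0 i = (i == j)%:R.
Proof. by rewrite /evec mxE eqxx. Qed.

Lemma sumsq_shift z (j : 'I_n) (h : R) :
  \sum_(i < n) (h *: evec R j + z) 0 i ^+ 2 = \sum_(i < n) z 0 i ^+ 2 + 2 * h * z 0 j + h ^+ 2.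
Proof.
rewrite (bigD1 j) //= [in RHS](bigD1 j) //=.
rewrite !mxE !eqxx /= mulr1.
have -> : \sum_(i < n | i != j) (h *: evec R j + z) 0 i ^+ 2 = \sum_(i < n | i != j) z 0 i ^+ 2.
  apply: eq_bigr => i ij; rewrite !mxE eqxx (negbTE ij) /= mulr0 add0r //.
ring.
Qed.

Lemma sumsq_ge0 z : 0 <= \sum_(i < n) z 0 i ^+ 2.
Proof. by apply: sumr_ge0 => i _; rewrite sqr_ge0. Qed.

Lemma enorm_ge0 z : 0 <= enorm z.
Proof. exact: sqrtr_ge0. Qed.

Lemma enorm_sq z : enorm z ^+ 2 = \sum_(i < n) z 0 i ^+ 2.
Proof. by rewrite /enorm sqr_sqrtr // sumsq_ge0. Qed.

Lemma zj_le z (j : 'I_n) : z 0 j ^+ 2 <= enorm z ^+ 2.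
Proof.
rewrite enorm_sq (bigD1 j) //= lerDl; apply: sumr_ge0 => i _; exact: sqr_ge0.
Qed.

Lemma enorm_eq0 z : enorm z = 0 -> z = 0.
Proof.
move=> e; have : enorm z ^+ 2 = 0 by rewrite e expr2 mulr0.
rewrite enorm_sq => /eqP; rewrite psumr_eq0; last by move=> i _; rewrite sqr_ge0.
move=> /allP H; apply/rowP => i; rewrite mxE.
by have := H i (mem_index_enum _); rewrite /= sqrf_eq0 => /eqP.
Qed.

Lemma enorm_shift z (j : 'I_n) (h : R) :
  enorm (h *: evec R j + z) ^+ 2 = enorm z ^+ 2 + 2 * h * z 0 j + h ^+ 2.
Proof. by rewrite !enorm_sq sumsq_shift. Qed.
End V.
Section Main.
Variable R : realType.
Variable n : nat.
Variables (a sigma : R).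
Hypothesis ha : 0 < a.
Hypothesis hs : 0 < sigma.

Lemma dFc (c x : 'rV[R]_n) (j : 'I_n) :
  is_derive x (evec R j) (Fc a sigma c)
    (ffun a sigma (enorm (x - c)) / enorm (x - c) * (x - c) 0 j).
Proof.
set z := x - c; set P0 := enorm z; set F := ffun a sigma P0.
have P00 : 0 <= P0 by exact: enorm_ge0.
have F0 : 0 <= F by exact: f_ge0.
apply: (@deriv_boundV _ _ _ _ _ _ (2 * F / P0 + 1) 1) => //.
  by rewrite addr_ge0 // divr_ge0 // mulr_ge0.
move=> h h0 _.
have e1 : Fc a sigma c (h *: evec R j + x) = Phi R a sigma (enorm (h *: evec R j + z)).
  by rewrite /Fc /Ffun /z addrA.
have e2 : Fc a sigma c x = Phi R a sigma P0 by [].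
rewrite e1 e2.
apply: (@alg_q R (enorm (h *: evec R j + z)) P0 h (z 0 j) F).
- exact: enorm_ge0.
- exact: P00.
- exact: enorm_shift.
- exact: zj_le.
- exact: h0.
- exact: F0.
- by move=> P0e; rewrite /F P0e; exact: f_0.
- exact: (@Phi_err R a sigma ha hs _ _ P00 (@enorm_ge0 R n _)).
Qed.

Lemma transfer (f : 'rV[R]_n -> R) (x e : 'rV[R]_n) (g : R -> R) (L : R) :
  (forall h : R, f (h *: e + x) = g h) -> f x = g 0 ->
  is_derive (0:R) 1 g L -> is_derive x e f L.
Proof.
move=> H H0 [d1 d2].
have E : (fun h : R => h^-1 *: ((f \o shift x) (h *: e) - f x)) =
         (fun h : R => h^-1 *: ((g \o shift 0) (h *: 1) - g 0)).
  by apply/funext => h /=; rewrite /shift /= H H0 addr0 [h *: 1]mulr1.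
split; first by rewrite /derivable E.
by rewrite /derive E.
Qed.

Lemma dV0 (v : R -> R) (x : 'rV[R]_n) (j : 'I_n) : 0 < enorm x -> derivable v (enorm x) 1 ->
  is_derive x (evec R j) (fun y => v (enorm y)) ('D_1 v (enorm x) * (x 0 j / enorm x)).
Proof.
move=> N0 dv.
pose rho := fun h : R => enorm (h *: evec R j + x).
have r0 : rho 0 = enorm x by rewrite /rho scale0r add0r.
have drho : is_derive (0:R) 1 rho (x 0 j / enorm x).
  apply: (@deriv_boundV _ _ _ _ _ _ (2 / enorm x) 1) => //.
    by rewrite divr_ge0 // ltW.
  move=> h h0 _.
  have -> : rho (h *: 1 + 0) = enorm (h *: evec R j + x) by rewrite /rho addr0 [h *: 1]mulr1.
  rewrite r0.
  have := @alg_dq R (enorm (h *: evec R j + x)) (enorm x) h (x 0 j) (@enorm_ge0 R n _) N0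
     (@enorm_shift R n _ _ _) (@zj_le R n _ _) h0.
  by rewrite [h^-1 * _]mulrC [2 / _ * _]mulrAC.
have dv' : is_derive (rho 0) 1 v ('D_1 v (enorm x)) by rewrite r0; exact: derivableP.
have dc := @is_derive1_comp R v rho 0 _ _ dv' drho.
apply: (@transfer _ _ _ (v \o rho) _ _ _ dc) => //.
by rewrite /= r0.
Qed.

Lemma enorm_e (j : 'I_n) (t : R) : enorm (t *: evec R j) = `|t|.
Proof.
rewrite /enorm -[t *: evec R j]addr0 sumsq_shift.
have -> : \sum_(i < n) (0 : 'rV[R]_n) 0 i ^+ 2 = 0 by apply: big1 => i _; rewrite mxE expr2 mulr0.
by rewrite mxE mulr0 add0r add0r sqrtr_sqr.
Qed.

Lemma v_derivable (v : R -> R) (n0 : (0 < n)%N) (N : R) :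
  C1 (fun x : 'rV[R]_n => v (enorm x)) -> 0 < N -> derivable v N 1.
Proof.
move=> hC1 N0.
pose j0 : 'I_n := Ordinal n0.
have [d _] := hC1 j0.
have dd := d (N *: evec R j0).
pose g := fun t : R => v (enorm (t *: evec R j0)).
have dg : derivable g N 1.
  have E : (fun h : R => h^-1 *: (((fun x : 'rV[R]_n => v (enorm x)) \o shift (N *: evec R j0)) (h *: evec R j0)
              - v (enorm (N *: evec R j0)))) =
           (fun h : R => h^-1 *: ((g \o shift N) (h *: 1) - g N)).
    by apply/funext => h /=; rewrite /g /shift /= [h *: 1]mulr1 scalerDl.
  by move: dd; rewrite /derivable E.
apply: (near_eq_derivable _ dg).
apply: filterS (lt_nbhsr N0) => t t0.
by rewrite /g enorm_e gtr0_norm.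
Qed.

Lemma v_sign (v : R -> R) (N : R) : 0 < N -> derivable v N 1 ->
  (forall r s : R, 0 <= r -> r <= s -> v s <= v r) -> 'D_1 v N <= 0.
Proof.
move=> N0 dv hd.
rewrite /derive; apply: limr_le => //.
exists N => // h /= hb h0; rewrite /ball /= sub0r normrN in hb.
rewrite /shift /= [h *: 1]mulr1. change (h^-1 * (v (h + N) - v N) <= 0).
have [hp|hn] := ltP 0 h.
  have : v (h + N) <= v N by apply: hd; [exact: ltW | lra].
  have : 0 < h^-1 by rewrite invr_gt0.
  move=> *; nra.
have hn' : h < 0 by rewrite lt_neqAle h0 hn.
have : v N <= v (h + N).
  apply: hd; last by lra.
  by move: hb; rewrite ltr0_norm //; lra.
have : h^-1 < 0 by rewrite invr_lt0.
move=> *; nra.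
Qed.
End Main.

Section Final.
Variable R : realType.
Variable n : nat.
Variables (a sigma : R).
Hypothesis ha : 0 < a.
Hypothesis hs : 0 < sigma.
Variable v : R -> R.
Variable j0 : 'I_n.
Hypothesis j00 : nat_of_ord j0 = 0%N.

Lemma fv (b : R) : firstvec n b = b *: evec R j0.
Proof.
apply/rowP => i; rewrite !mxE eqxx /=.
have -> : (i == j0) = ((i : nat) == 0%N) by rewrite -j00.
by case: eqP => _; rewrite ?mulr1 ?mulr0.
Qed.

Lemma ysqE (x : 'rV[R]_n) : ysq x = \sum_(i < n | i != j0) x 0 i ^+ 2.
Proof.
by apply: eq_bigl => i; rewrite -j00.
Qed.

Lemma sumE (x : 'rV[R]_n) (b : R) :
  \sum_(j < n) ((- b) *: evec R j0 + x) 0 j * x 0 j = enorm x ^+ 2 - b * x 0 j0.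
Proof.
rewrite enorm_sq.
have -> : \sum_(j < n) ((- b) *: evec R j0 + x) 0 j * x 0 j =
   \sum_(j < n) ((- b) * (evec R j0 0 j * x 0 j) + x 0 j ^+ 2).
  by apply: eq_bigr => j _; rewrite !mxE; ring.
rewrite big_split /= -mulr_sumr (bigD1 j0) //= big1; last first.
  by move=> i ij; rewrite evecE (negbTE ij) mul0r.
by rewrite evecE eqxx mul1r addr0 mulNr addrC.
Qed.

Lemma commE (b : R) (x : 'rV[R]_n) (N0 : 0 < enorm x) (dv : derivable v (enorm x) 1) :
  commVgamma a sigma (fun y => v (enorm y)) (b *: evec R j0) x =
  - 2 * (ffun a sigma (enorm ((- b) *: evec R j0 + x)) / enorm ((- b) *: evec R j0 + x)
         * 'D_1 v (enorm x) / enorm x * (enorm x ^+ 2 - b * x 0 j0)).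
Proof.
rewrite /commVgamma /dotv; congr (_ * _).
have ex : x - b *: evec R j0 = (- b) *: evec R j0 + x by rewrite addrC scaleNr.
rewrite -sumE mulr_sumr; apply: eq_bigr => j _.
rewrite /grad !mxE.
have [_ ->] := @dFc R n a sigma ha hs (b *: evec R j0) x j.
have [_ ->] := @dV0 R n v x j N0 dv.
rewrite ex !mxE; set t := ((0 == 0) && (j == j0))%:R; ring.
Qed.
End Final.

Theorem lemma2p2 (R : realType) (n : nat) (a sigma : R) (v : R -> R) (c1 : R)
  (hn : (3 <= n)%N) (ha : 0 < a) (hsigma : 1 / 2 < sigma)
  (hC1 : C1 (fun x : 'rV[R]_n => v (enorm x)))
  (hdecr : forall r s : R, 0 <= r -> r <= s -> v s <= v r) :
  let V0 := fun x : 'rV[R]_n => v (enorm x) in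
  let c := firstvec n c1 in
  forall x : 'rV[R]_n, x != 0 ->
    commVgamma a sigma V0 (- c) x + commVgamma a sigma V0 c x >=
      - 2 * derive1 v (enorm x)
        * Num.min (ffun a sigma (enorm (x + c))) (ffun a sigma (enorm (x - c)))
        * (2 * ysq x / enorm x) * (1 / (enorm x + enorm c))
    /\
    - 2 * derive1 v (enorm x)
        * Num.min (ffun a sigma (enorm (x + c))) (ffun a sigma (enorm (x - c)))
        * (2 * ysq x / enorm x) * (1 / (enorm x + enorm c)) >= 0.
Proof.
move=> V0 c x hx.
have hs : 0 < sigma by apply: lt_trans hsigma; rewrite divr_gt0.
have n0 : (0 < n)%N by apply: leq_trans hn.
pose j0 : 'I_n := Ordinal n0.
have j00 : nat_of_ord j0 = 0%N by [].
have N0 : 0 < enorm x.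
  rewrite lt_def enorm_ge0 andbT; apply/eqP => /enorm_eq0 e.
  by rewrite e eqxx in hx.
have dv := @v_derivable R n v n0 _ hC1 N0.
have Dle := @v_sign R v _ N0 dv hdecr.
have ec : c = c1 *: evec R j0 by rewrite /c (@fv R n j0 j00 c1).
rewrite /V0 ec -scaleNr !(@commE R n a sigma ha hs v j0 _ x N0 dv) opprK.
rewrite derive1E [x + c1 *: _]addrC [x + - c1 *: _]addrC enorm_e.
have -> : enorm x ^+ 2 - - c1 * x 0 j0 = enorm x ^+ 2 + c1 * x 0 j0 by ring.
set Pp := enorm (c1 *: evec R j0 + x).
set Pm := enorm ((- c1) *: evec R j0 + x).
set N := enorm x.
have r20 : 0 <= ysq x by apply: sumr_ge0 => i _; rewrite sqr_ge0.
have eN : N ^+ 2 = x 0 j0 ^+ 2 + ysq x.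
  by rewrite /N enorm_sq (bigD1 j0) //= (ysqE j00).
have ePp : Pp ^+ 2 = (x 0 j0 + c1) ^+ 2 + ysq x.
  rewrite /Pp enorm_shift -/N eN; ring.
have ePm : Pm ^+ 2 = (x 0 j0 - c1) ^+ 2 + ysq x.
  rewrite /Pm enorm_shift -/N eN; ring.
have z1 : Pm = 0 -> ffun a sigma Pm = 0 by move=> ->; exact: f_0.
have z2 : Pp = 0 -> ffun a sigma Pp = 0 by move=> ->; exact: f_0.
have H := @L_final R (x 0 j0) c1 (ysq x) (ffun a sigma Pp) (ffun a sigma Pm) Pp Pm N `|c1| ('D_1 v N)
  r20 (@enorm_ge0 R n _) (@enorm_ge0 R n _) ePp ePm N0 eN erefl (@f_ge0 R a sigma ha hs _) (@f_ge0 R a sigma ha hs _)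
  (@f_mono R a sigma ha hs _ _) (@f_mono R a sigma ha hs _ _) z1 z2 Dle.
exact: H.
Qed.
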